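(* Let $M>0$, $D\in\mathbb{N}$, $l=2D$, and $c\in\mathbb{R}^D$ with $\|c\|_\infty\le M/2$. Let $H\in\mathbb{R}^{5\times l}$ be the structured embedding matrix whose first row is $(x^1,\dots,x^D,0,\dots,0)$ and second row is zero, with $\|H\|_\infty\le M/2$. Then there is a transformer block $\mathrm{B}$ with $D$ attention heads and a feed-forward layer of depth $3$, with all parameters bounded in absolute value by $O(lM)$, such that $\mathrm{B}(H)$ is the structured embedding matrix whose first row is $(x^1,\dots,x^D,x^1-c^1,\dots,x^D-c^D)$ and whose second row is zero (rows $3$–$5$ unchanged).
   Context: $\sigma(x)=\max(0,x)$. An attention head with $Q,K,V\in\mathbb{R}^{5\times5}$ maps $H=[h_1,\dots,h_l]$ to the matrix whose $i$-th column is $\sum_{k=1}^l\sigma(\langle Qh_i,Kh_k\rangle)Vh_k$; a multi-head attention layer $\mathrm{MHA}$ is a sum of attention heads; a feed-forward layer of depth $L$ is $h\mapsto W_L\sigma(\cdots\sigma(W_1h+b_1)\cdots)+b_L$ applied column-wise; a transformer block is $\mathrm{B}(H)=\mathrm{FFN}(\mathrm{MHA}(H)+H)+\mathrm{MHA}(H)+H$. A structured embedding matrix $H\in\mathbb{R}^{5\times l}$ has $t$-th column with entries $(h_t^3,h_t^4)=\mathcal{I}_t=(\cos(\tfrac{t}{l}\tfrac{\pi}{2}),\sin(\tfrac{t}{l}\tfrac{\pi}{2}))$ and $h_t^5=1$. $\|H\|_\infty$ is the maximal absolute entry. *)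

(* Defs.v *)
From HB Require Import structures.
From mathcomp Require Import all_boot all_order all_algebra.
From mathcomp Require Import all_classical all_reals all_analysis.
Set Implicit Arguments. Unset Strict Implicit. Unset Printing Implicit Defensive.
Import Order.TTheory GRing.Theory Num.Theory.
Local Open Scope ring_scope.

Section Transformer.
Variable R : realType.

Definition relu (x : R) : R := Num.max 0 x.

Definition attn_head (l : nat) (Q K V : 'M[R]_5) (H : 'M[R]_(5, l)) : 'M[R]_(5, l) :=
  \matrix_(r < 5, i < l)
    \sum_(k < l)
      relu (\sum_(j < 5) (Q *m H) j i * (K *m H) j k) * (V *m H) r k.

Definition mha (nh l : nat) (Qs Ks Vs : 'I_nh -> 'M[R]_5) (H : 'M[R]_(5, l))
  : 'M[R]_(5, l) :=
  \sum_(m < nh) attn_head (Qs m) (Ks m) (Vs m) H.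

Definition ffn3 (n1 n2 l : nat)
  (W1 : 'M[R]_(n1, 5)) (b1 : 'cV[R]_n1)
  (W2 : 'M[R]_(n2, n1)) (b2 : 'cV[R]_n2)
  (W3 : 'M[R]_(5, n2)) (b3 : 'cV[R]_5) (H : 'M[R]_(5, l)) : 'M[R]_(5, l) :=
  \matrix_(r < 5, i < l)
    (W3 *m map_mx relu (W2 *m map_mx relu (W1 *m col i H + b1) + b2) + b3) r 0.

Definition tblock (nh n1 n2 l : nat) (Qs Ks Vs : 'I_nh -> 'M[R]_5)
  (W1 : 'M[R]_(n1, 5)) (b1 : 'cV[R]_n1)
  (W2 : 'M[R]_(n2, n1)) (b2 : 'cV[R]_n2)
  (W3 : 'M[R]_(5, n2)) (b3 : 'cV[R]_5) (H : 'M[R]_(5, l)) : 'M[R]_(5, l) :=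
  let A := mha Qs Ks Vs H + H in
  ffn3 W1 b1 W2 b2 W3 b3 A + A.

(* Structured embedding matrix with given first and second rows:
   column t (t = 1..l, i.e. index i = t-1) has rows 3,4 equal to
   (cos(t/l * pi/2), sin(t/l * pi/2)) and row 5 equal to 1. *)
Definition struct_embed (l : nat) (r1 r2 : 'rV[R]_l) : 'M[R]_(5, l) :=
  \matrix_(r < 5, i < l)
    let th := ((i.+1)%:R / l%:R) * (pi / 2) in
    if r == 0 :> nat then r1 0 i
    else if r == 1 :> nat then r2 0 i
    else if r == 2 :> nat then cos th
    else if r == 3 :> nat then sin th
    else 1.

Definition mx_abs_le (m n : nat) (A : 'M[R]_(m, n)) (b : R) : Prop :=
  forall i j, `|A i j| <= b.

End Transformer.

(* Main.v *)
Require Import Defs.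
From HB Require Import structures.
From mathcomp Require Import all_boot all_order all_algebra.
From mathcomp Require Import all_classical all_reals all_analysis.
From mathcomp Require Import ring lra.
Import Order.TTheory GRing.Theory Num.Theory.
Local Open Scope ring_scope.
Ltac sg := match goal with |- ?g => idtac "GOAL:" g end.
Section S.
Variable R : realType.
Lemma cos_le_mono (a b : R) : 0 <= a -> a <= b -> b <= pi -> cos b <= cos a.
Proof.
move=> a0 ab bpi; rewrite le_eqVlt in ab; case/orP: ab => [/eqP->//|ab].
apply: ltW; rewrite ltr_cos // ?in_itv /=; by [|apply/andP; split; lra].
Qed.
Lemma cos_gap (l a b : nat) : (a < l)%N -> (b < l)%N -> a != b ->
  cos ((a.+1)%:R / l%:R * (pi / 2) - (b.+1)%:R / l%:R * (pi / 2) : R)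
   <= cos (pi / 2 / l%:R).
Proof.
wlog ab : a b / (b < a)%N => [W|] al bl nab.
  case: (ltngtP b a) => h; first exact: W.
  - by rewrite -cosN opprB W // eq_sym.
  - by rewrite h eqxx in nab.
have l0 : (0 < l%:R :> R) by rewrite ltr0n; apply: leq_ltn_trans al.
have -> : (a.+1)%:R / l%:R * (pi / 2) - (b.+1)%:R / l%:R * (pi / 2)
   = (a - b)%:R * (pi / 2 / l%:R) :> R.
  rewrite natrB; last exact: ltnW.
  have E n : (n.+1)%:R = n%:R + 1 :> R by rewrite natr1.
  rewrite (E a) (E b); field; exact: lt0r_neq0.
have pi0 := pi_gt0 R.
have u0 : 0 < pi / 2 / l%:R :> R by apply: divr_gt0 => //; apply: divr_gt0.
have h1 : (1 <= (a - b)%:R :> R) by rewrite ler1n subn_gt0.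
have h2 : ((a - b)%:R <= l%:R :> R).
  by rewrite ler_nat; apply: leq_trans (leq_subr _ _) (ltnW al).
have e : l%:R * (pi / 2 / l%:R) = pi / 2 :> R by field; exact: lt0r_neq0.
apply: cos_le_mono.
- exact: ltW.
- by rewrite -[X in X <= _]mul1r ler_wpM2r // ltW.
- apply: (le_trans (y := l%:R * (pi / 2 / l%:R))); first by rewrite ler_wpM2r // ltW.
  rewrite e; lra.
Qed.
Lemma cos_gap_lt1 (l : nat) : (0 < l)%N -> cos (pi / 2 / l%:R : R) < 1.
Proof.
move=> l0; have pi0 := pi_gt0 R.
have l0' : (0 < l%:R :> R) by rewrite ltr0n.
have u0 : 0 < pi / 2 / l%:R :> R by apply: divr_gt0 => //; apply: divr_gt0.
have h : (1 <= l%:R :> R) by rewrite ler1n.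
have u1 : pi / 2 / l%:R <= pi :> R.
  rewrite ler_pdivrMr //; nra.
rewrite -[X in _ < X]cos0 ltr_cos // ?in_itv /=; apply/andP; split; lra.
Qed.
Definition th (l t : nat) : R := (t.+1)%:R / l%:R * (pi / 2).
Definition gu (l : nat) : R := pi / 2 / l%:R.

Definition Qm (l T : nat) : 'M[R]_5 := \matrix_(j, q)
  if j == 0 :> nat then
    (if q == 2 :> nat then cos (th l T) else if q == 3 :> nat then sin (th l T)
     else if q == 4 :> nat then - cos (gu l) else 0)
  else if j == 1 :> nat then (if q == 4 :> nat then 1 else 0) else 0.

Definition Km (l m : nat) : 'M[R]_5 := \matrix_(j, q)
  if j == 0 :> nat then (if q == 4 :> nat then 1 else 0)
  else if j == 1 :> nat then
    (if q == 2 :> nat then cos (th l m) else if q == 3 :> nat then sin (th l m)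
     else if q == 4 :> nat then -1 else 0)
  else 0.

Definition Vm (cm : R) : 'M[R]_5 := \matrix_(j, q)
  if j == 1 :> nat then (if q == 0 :> nat then 1 else if q == 4 :> nat then - cm else 0)
  else 0.

Lemma sum5 (F : 'I_5 -> R) : \sum_(q < 5) F q =
  F ord0 + F (lift ord0 ord0) + F (lift ord0 (lift ord0 ord0))
  + F (lift ord0 (lift ord0 (lift ord0 ord0)))
  + F (lift ord0 (lift ord0 (lift ord0 (lift ord0 ord0)))).
Proof. by rewrite !big_ord_recl big_ord0 addr0 !addrA. Qed.

Lemma QH l T (r1 r2 : 'rV[R]_l) j i :
  (Qm l T *m struct_embed r1 r2) j i =
  if j == 0 :> nat then cos (th l T - th l i) - cos (gu l)
  else if j == 1 :> nat then 1 else 0.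
Proof.
rewrite mxE sum5 !mxE /=.
case: j => [[|[|[|[|[|?]]]]] ?] /=; rewrite ?cosB /th; ring.
Qed.

Lemma KH l m (r1 r2 : 'rV[R]_l) j k :
  (Km l m *m struct_embed r1 r2) j k =
  if j == 0 :> nat then 1
  else if j == 1 :> nat then cos (th l m - th l k) - 1 else 0.
Proof.
rewrite mxE sum5 !mxE /=.
case: j => [[|[|[|[|[|?]]]]] ?] /=; rewrite ?cosB /th; ring.
Qed.

Lemma VH l cm (r1 r2 : 'rV[R]_l) j k :
  (Vm cm *m struct_embed r1 r2) j k = if j == 1 :> nat then r1 0 k - cm else 0.
Proof.
rewrite mxE sum5 !mxE /=.
case: j => [[|[|[|[|[|?]]]]] ?] /=; ring.
Qed.

Lemma score l T m (r1 r2 : 'rV[R]_l) i k :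
  \sum_(j < 5) (Qm l T *m struct_embed r1 r2) j i * (Km l m *m struct_embed r1 r2) j k
  = (cos (th l T - th l i) - cos (gu l)) + (cos (th l m - th l k) - 1).
Proof. rewrite sum5 !QH !KH /=; ring. Qed.

Lemma relu0 (y : R) : y <= 0 -> relu y = 0.
Proof. by move=> h; rewrite /relu; apply/max_idPl. Qed.
Lemma reluP (y : R) : 0 <= y -> relu y = y.
Proof. by move=> h; rewrite /relu; apply/max_idPr. Qed.

Lemma relu_score l T m i k : (T < l)%N -> (m < l)%N -> (i < l)%N -> (k < l)%N ->
  relu ((cos (th l T - th l i) - cos (gu l)) + (cos (th l m - th l k) - 1))
  = if (i == T) && (k == m) then 1 - cos (gu l) else 0.
Proof.
move=> Tl ml il kl.
have l0 : (0 < l)%N by apply: leq_ltn_trans Tl.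
have cu := @cos_gap_lt1 l l0.
have c1 := cos_le1 (th l T - th l i).
have c2 := cos_le1 (th l m - th l k).
have g1 : i != T -> cos (th l T - th l i) <= cos (gu l).
  by move=> h; apply: cos_gap => //; rewrite eq_sym.
have g2 : k != m -> cos (th l m - th l k) <= cos (gu l).
  by move=> h; apply: cos_gap => //; rewrite eq_sym.
case: (eqVneq i T) => [->|iT] /=; case: (eqVneq k m) => [->|km] /=.
- by rewrite !subrr cos0 reluP; [ring|lra].
- by rewrite relu0 // subrr cos0; have := g2 km; lra.
- by rewrite relu0 // subrr cos0; have := g1 iT; lra.
- by rewrite relu0 //; have := g1 iT; have := g2 km; lra.
Qed.

Lemma head l T (k0 : 'I_l) cm (r1 r2 : 'rV[R]_l) r i : (T < l)%N ->
  attn_head (Qm l T) (Km l k0) (Vm cm) (struct_embed r1 r2) r i =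
  if i == T :> nat then (1 - cos (gu l)) * (if r == 1 :> nat then r1 0 k0 - cm else 0)
  else 0.
Proof.
move=> Tl; rewrite mxE.
under eq_bigr => k _ do rewrite score relu_score // VH.
rewrite (bigD1 k0) //= eqxx andbT big1 ?addr0; last first.
  move=> k nk; have -> : (k == k0 :> nat) = false by apply/negbTE.
  by rewrite andbF mul0r.
by case: (i == T :> nat); rewrite ?mul0r.
Qed.

Definition W1 (N : nat) : 'M[R]_(N + N, 5) := \matrix_(p, q)
  if q == 1 :> nat then (if (p < N)%N then 1 else -1) else 0.
Definition W2 (N : nat) : 'M[R]_(2, N + N) := \matrix_(p, q)
  if (p == 0 :> nat) == (q < N)%N then 1 else 0.
Definition W3 (N : nat) (w : R) : 'M[R]_(5, 2) := \matrix_(r, p)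
  if r == 0 :> nat then (if p == 0 :> nat then w else - w)
  else if r == 1 :> nat then (if p == 0 :> nat then - N%:R^-1 else N%:R^-1) else 0.

Lemma relu_sub (a : R) : relu a - relu (- a) = a.
Proof.
case: (leP 0 a) => h.
- by rewrite reluP // relu0 ?subr0 //; lra.
- by rewrite relu0 ?reluP ?opprK ?sub0r //; lra.
Qed.

Lemma ffn_eq (N : nat) (w : R) l (A : 'M[R]_(5, l)) r i : (0 < N)%N ->
  ffn3 (W1 N) 0 (W2 N) 0 (W3 N w) 0 A r i =
  if r == 0 :> nat then w * N%:R * A 1 i else if r == 1 :> nat then - A 1 i else 0.
Proof.
move=> N0; rewrite mxE !addr0.
set a := A 1 i.
have e1 p : (map_mx (@relu R) (W1 N *m col i A)) p 0 = relu ((if (p < N)%N then 1 else -1) * a).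
  rewrite !mxE sum5 !mxE /= !mul0r add0r !addr0 /a; congr (relu (_ * A _ i)); exact/val_inj.
have e2 p : (W2 N *m map_mx (@relu R) (W1 N *m col i A)) p 0 =
    N%:R * (if p == 0 :> nat then relu a else relu (- a)).
  rewrite mxE big_split_ord /=.
  under eq_bigr => q _ do rewrite e1 mxE /= ltn_ord.
  under [X in _ + X = _]eq_bigr => q _ do rewrite e1 mxE /= ltnNge leq_addr /=.
  rewrite mul1r mulN1r !sumr_const !card_ord.
  case: p => [[|[|?]] ?] /=; rewrite ?mul1r ?mul0r ?mul0rn ?add0r ?addr0 mulr_natl ?mul0rn ?addr0 ?add0r //.
have NR : (0 < N%:R :> R) by rewrite ltr0n.
have e3 p : (map_mx (@relu R) (W2 N *m map_mx (@relu R) (W1 N *m col i A))) p 0 =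
   relu ((W2 N *m map_mx (@relu R) (W1 N *m col i A)) p 0) by rewrite mxE.
rewrite mxE big_ord_recl big_ord_recl big_ord0 addr0 !e3 !e2 /=.
rewrite !(reluP (_ * relu _)); last 2 first.
  by apply: mulr_ge0; [lra| rewrite /relu le_max lexx].
  by apply: mulr_ge0; [lra| rewrite /relu le_max lexx].
rewrite !mxE /=.
have := relu_sub a.
case: r => [[|[|?]] ?] /= h; last by rewrite !mul0r addr0.
- by rewrite -[in RHS]h; ring.
- by rewrite -[in RHS]h; field; apply: lt0r_neq0.
Qed.


Lemma mha_eq D (x c : 'rV[R]_D) r i :
  mha (fun m : 'I_D => Qm (D + D) (D + m)) (fun m => Km (D + D) (lshift D m))
      (fun m => Vm (c 0 m)) (struct_embed (row_mx x (0 : 'rV[R]_D)) 0) r i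
  = (1 - cos (gu (D + D))) * (if r == 1 :> nat then (row_mx 0 (x - c)) 0 i else 0).
Proof.
rewrite /mha summxE.
under eq_bigr => m _ do rewrite head ?ltn_add2l //.
rewrite -(fintype.splitK i); case: (fintype.split i) => j /=.
- rewrite big1; last first.
    move=> m _; have -> : (j == D + m :> nat) = false.
      by apply/negbTE; rewrite neq_ltn (leq_trans (ltn_ord j)) ?leq_addr.
    by [].
  by rewrite row_mxEl mxE; case: ifP; rewrite ?mulr0.
- rewrite (bigD1 j) //= eqxx big1 ?addr0; last first.
    move=> m hm; rewrite eqn_add2l (_ : (j == m :> nat) = false) //.
    by apply/negbTE; rewrite eq_sym.
  by rewrite row_mxEr row_mxEl !mxE.
Qed.
End S.

Lemma split_r m n (j : 'I_n) : fintype.split (rshift m j) = inr j.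
Proof. exact: (unsplitK (inr _ j)). Qed.
Lemma split_l m n (j : 'I_m) : fintype.split (lshift n j) = inl j.
Proof. exact: (unsplitK (inl _ j)). Qed.


Theorem lemma5 (R : realType) :
  exists C : R, 0 < C /\
  forall (M : R) (D : nat) (c x : 'rV[R]_D),
    0 < M ->
    mx_abs_le c (M / 2) ->
    mx_abs_le (struct_embed (row_mx x (0 : 'rV[R]_D)) 0) (M / 2) ->
    exists (n1 n2 : nat) (Qs Ks Vs : 'I_D -> 'M[R]_5)
           (W1 : 'M[R]_(n1, 5)) (b1 : 'cV[R]_n1)
           (W2 : 'M[R]_(n2, n1)) (b2 : 'cV[R]_n2)
           (W3 : 'M[R]_(5, n2)) (b3 : 'cV[R]_5),
      let bnd := C * (D + D)%:R * M in
      (forall m, mx_abs_le (Qs m) bnd /\ mx_abs_le (Ks m) bnd /\ mx_abs_le (Vs m) bnd) /\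
      mx_abs_le W1 bnd /\ mx_abs_le b1 bnd /\
      mx_abs_le W2 bnd /\ mx_abs_le b2 bnd /\
      mx_abs_le W3 bnd /\ mx_abs_le b3 bnd /\
      tblock Qs Ks Vs W1 b1 W2 b2 W3 b3 (struct_embed (row_mx x (0 : 'rV[R]_D)) 0)
      = struct_embed (row_mx x (x - c)) 0.
Proof.
exists 1; split; first exact: ltr01.
move=> M D c x M0 hc hH.
case: D c x hc hH => [|D'] c x hc hH.
  exists 0%N, 0%N, (fun _ => 0), (fun _ => 0), (fun _ => 0), 0, 0, 0, 0, 0, 0.
  move=> bnd.
  have Z m n : mx_abs_le (0 : 'M[R]_(m, n)) bnd.
    by move=> p q; rewrite mxE normr0 /bnd mulr0 mul0r.
  split; first by move=> [].
  do 6! (split; first exact: Z).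
  by apply/matrixP => r [].
set D := D'.+1.
have M2 : 1 <= M / 2.
  have := hH (@Ordinal 5 4 isT) (@Ordinal (D + D) 0 isT).
  by rewrite mxE /= normr1.
have l0 : (0 < D + D)%N by [].
set g0 := 1 - cos (gu R (D + D)).
have g0p : 0 < g0 by have := @cos_gap_lt1 R _ l0; rewrite /g0; lra.
set N := (Num.truncn (g0^-1)).+1.
have gN : g0^-1 < N%:R.
  have gi : 0 <= g0^-1 by rewrite invr_ge0 ltW.
  by have /andP[] := truncn_itv gi.
have NR : 0 < N%:R :> R by rewrite ltr0n.
have g0N : 1 < g0 * N%:R.
  have : g0 * g0^-1 < g0 * N%:R by rewrite ltr_pM2l.
  by rewrite mulfV // gt_eqF.
set w := (g0 * N%:R)^-1.
have hw : `|w| <= 1.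
  rewrite ger0_norm /w ?invr_ge0; last lra.
  by rewrite invf_le1; lra.
have hN : `|N%:R^-1 : R| <= 1.
  rewrite ger0_norm ?invr_ge0; last lra.
  by rewrite invf_le1 // ler1n.
exists (N + N)%N. exists 2%N. exists (fun m : 'I_D => Qm R (D + D) (D + m)).
exists (fun m => Km R (D + D) (lshift D m)). exists (fun m => Vm R (c 0 m)).
exists (W1 R N).
exists 0.
exists (W2 R N).
exists 0.

exists (W3 R N w).
exists 0.
move=> bnd.
have lR : 2 <= (D + D)%:R :> R.
  by rewrite ler_nat; exact: (leq_add (ltn0Sn D') (ltn0Sn D')).
have b1 : 1 <= bnd by rewrite /bnd mul1r; nra.
have bM : M / 2 <= bnd by rewrite /bnd mul1r; nra.
have B y : `|y| <= 1 -> `|y| <= bnd by move=> h; apply: le_trans h b1.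
have Z m n : mx_abs_le (0 : 'M[R]_(m, n)) bnd.
  by move=> p q; rewrite mxE normr0; lra.
split.
  move=> m; split; last split.
  - move=> p q; rewrite mxE; repeat case: ifP => _;
      rewrite ?normrN; apply: B; rewrite ?normr0 ?normr1 ?cos_max ?sin_max //.
  - move=> p q; rewrite mxE; repeat case: ifP => _;
      rewrite ?normrN; apply: B; rewrite ?normr0 ?normr1 ?cos_max ?sin_max //.
  - move=> p q; rewrite mxE; repeat case: ifP => _;
      rewrite ?normrN; try (apply: B; rewrite ?normr0 ?normr1; done).
    by apply: le_trans (hc _ _) bM.
split; first by move=> p q; rewrite mxE; repeat case: ifP => _;
      rewrite ?normrN; apply: B; rewrite ?normr0 ?normr1.
split; first exact: Z.
split; first by move=> p q; rewrite mxE; repeat case: ifP => _;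
      rewrite ?normrN; apply: B; rewrite ?normr0 ?normr1.
split; first exact: Z.
split; first by move=> p q; rewrite mxE; repeat case: ifP => _;
      rewrite ?normrN; apply: B; rewrite ?normr0 ?normr1.
split; first exact: Z.
apply/matrixP => r i.
rewrite /tblock; cbv zeta; rewrite mxE ffn_eq //.
have eA r' (i' : 'I_(D + D)) : (mha (fun m : 'I_D => Qm R (D + D) (D + m))
  (fun m => Km R (D + D) (lshift D m)) (fun m => Vm R (c 0 m))
  (struct_embed (row_mx x 0) 0) + struct_embed (row_mx x 0) 0) r' i'
  = g0 * (if r' == 1 :> nat then (row_mx 0 (x - c)) 0 i' else 0)
    + struct_embed (row_mx x 0) 0 r' i'.
  by rewrite mxE mha_eq.
rewrite !eA /= !mxE /=.
case: r => [[|[|[|[|[|?]]]]] ?] //=; rewrite ?mxE ?mulr0 ?add0r ?addr0 ?addNr //.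
rewrite -(fintype.splitK i); case: (fintype.split i) => j /=.
- rewrite split_l !mxE.
  by rewrite /w; field; rewrite (lt0r_neq0 NR) (lt0r_neq0 g0p).
- rewrite split_r !mxE.
  by rewrite /w; field; rewrite (lt0r_neq0 NR) (lt0r_neq0 g0p).
Qed.
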